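(* Let $\Gamma = \{(x,y) \in \mathbb{R}^2 : y^2 = x^3 - x^2,\ x \neq 0\} \cup \{O\} \subset \mathbb{RP}^2$, where $O$ is the point at infinity lying on all lines parallel to the $y$-axis (and on the line at infinity). Define $\phi : \mathbb{R}/\mathbb{Z} \to \Gamma$ by $\phi(0) = O$ and, for $x \neq 0$, $\phi(x) = \left(\cot(\pi x)^2 + 1,\ \cot(\pi x)(\cot(\pi x)^2 + 1)\right)$. Then $\phi$ is a well-defined bijection, and for any three distinct elements $x, y, z \in \mathbb{R}/\mathbb{Z}$, the points $\phi(x), \phi(y), \phi(z)$ are collinear in $\mathbb{RP}^2$ if and only if $x + y + z = 0$ in $\mathbb{R}/\mathbb{Z}$. *)

(* Defs.v *)
From Stdlib Require Import Reals Lra ZArith ClassicalDescription.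
Open Scope R_scope.

(* Points of RP^2 that can lie on Gamma: affine points (x,y) = [x:y:1],
   and the point O = [0:1:0] at infinity in the direction of the y-axis. *)
Inductive pt : Type :=
| Aff : R -> R -> pt
| O : pt.

Definition hX (p : pt) : R := match p with Aff x _ => x | O => 0 end.
Definition hY (p : pt) : R := match p with Aff _ y => y | O => 1 end.
Definition hZ (p : pt) : R := match p with Aff _ _ => 1 | O => 0 end.

Definition on_line (a b c : R) (p : pt) : Prop :=
  a * hX p + b * hY p + c * hZ p = 0.

Definition collinear (p q r : pt) : Prop :=
  exists a b c : R, ~ (a = 0 /\ b = 0 /\ c = 0) /\
    on_line a b c p /\ on_line a b c q /\ on_line a b c r.

Definition in_Gamma (p : pt) : Prop :=
  match p with
  | Aff x y => y ^ 2 = x ^ 3 - x ^ 2 /\ x <> 0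
  | O => True
  end.

(* R/Z is represented by R, with equality modulo integers *)
Definition eqZ (x y : R) : Prop := exists k : Z, x - y = IZR k.

Definition cot (t : R) : R := cos t / sin t.

Definition phi (x : R) : pt :=
  if excluded_middle_informative (exists k : Z, x = IZR k) then O
  else let c := cot (PI * x) in Aff (c ^ 2 + 1) (c * (c ^ 2 + 1)).

(* Main.v *)
Require Import Defs.
From Stdlib Require Import Reals ZArith.
From Stdlib Require Import Lra Classical ClassicalDescription.
Open Scope R_scope.

Definition isint (x : R) : Prop := exists k : Z, x = IZR k.
Definition A (t : R) : pt := Aff (t ^ 2 + 1) (t * (t ^ 2 + 1)).

Lemma isint_sin x : isint x <-> sin (PI * x) = 0.
Proof.
  split.
  - intros [k Hk]. apply sin_eq_0_1. exists k. rewrite Hk. ring.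
  - intro H. destruct (sin_eq_0_0 _ H) as [k Hk]. exists k.
    apply (Rmult_eq_reg_l PI); [|exact PI_neq0]. rewrite Hk. ring.
Qed.

Lemma isint_add x w : isint x -> (isint (x + w) <-> isint w).
Proof.
  intros [k Hk]. split.
  - intros [m Hm]. exists (m - k)%Z. rewrite minus_IZR. lra.
  - intros [m Hm]. exists (k + m)%Z. rewrite plus_IZR. lra.
Qed.

Lemma isint_sub x y : isint x -> isint y -> isint (x - y).
Proof. intros [k Hk] [m Hm]. exists (k - m)%Z. rewrite minus_IZR. lra. Qed.

Lemma isint_sub2 x y : isint (x - y) -> isint y -> isint x.
Proof. intros [k Hk] [m Hm]. exists (k + m)%Z. rewrite plus_IZR. lra. Qed.

Lemma phi_int x : isint x -> phi x = O.
Proof. intro H. unfold phi. destruct excluded_middle_informative; tauto. Qed.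

Lemma phi_nint x : ~ isint x -> phi x = A (cot (PI * x)).
Proof. intro H. unfold phi. destruct excluded_middle_informative; [tauto|reflexivity]. Qed.

Lemma cot_eq a b : sin a <> 0 -> sin b <> 0 -> (cot a = cot b <-> sin (a - b) = 0).
Proof.
  intros Ha Hb. rewrite sin_minus. unfold cot. split; intro H.
  - assert (H2: cos a / sin a * (sin a * sin b) = cos b / sin b * (sin a * sin b)) by (rewrite H; reflexivity).
    field_simplify in H2; auto. lra.
  - apply (Rmult_eq_reg_r (sin a * sin b)); [|apply Rmult_integral_contrapositive_currified; auto].
    replace (cos a / sin a * (sin a * sin b)) with (cos a * sin b) by (field; auto).
    replace (cos b / sin b * (sin a * sin b)) with (sin a * cos b) by (field; auto).
    lra.
Qed.

Lemma sin2 a b : sin a <> 0 -> sin b <> 0 -> sin (a + b) = sin a * sin b * (cot a + cot b).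
Proof. intros. rewrite sin_plus. unfold cot. field. auto. Qed.

Lemma sin3 a b c : sin a <> 0 -> sin b <> 0 -> sin c <> 0 ->
  sin (a + b + c) = sin a * sin b * sin c * (cot a * cot b + cot a * cot c + cot b * cot c - 1).
Proof. intros. rewrite !sin_plus, cos_plus. unfold cot. field. auto. Qed.

Lemma col_swap12 p q r : collinear p q r -> collinear q p r.
Proof. intros [a [b [c H]]]. exists a, b, c. tauto. Qed.
Lemma col_swap23 p q r : collinear p q r -> collinear p r q.
Proof. intros [a [b [c H]]]. exists a, b, c. tauto. Qed.

Lemma col_aff t1 t2 t3 : t1 <> t2 -> t1 <> t3 -> t2 <> t3 ->
  (collinear (A t1) (A t2) (A t3) <-> t1*t2 + t1*t3 + t2*t3 = 1).
Proof.
  intros H12 H13 H23. split.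
  - intros [a [b [c [Hn [E1 [E2 E3]]]]]]. unfold on_line, A, hX, hY, hZ in *.
    set (D := (t1-t2)*(t1-t3)*(t2-t3)).
    assert (HD : D <> 0).
    { unfold D. repeat apply Rmult_integral_contrapositive_currified; lra. }
    assert (K1 : D * (a + b*(t1+t2+t3)) = 0).
    { replace (D * (a + b*(t1+t2+t3))) with
        ((t1-t3)*((a * (t1 ^ 2 + 1) + b * (t1 * (t1 ^ 2 + 1)) + c * 1) - (a * (t2 ^ 2 + 1) + b * (t2 * (t2 ^ 2 + 1)) + c * 1))
         - (t1-t2)*((a * (t1 ^ 2 + 1) + b * (t1 * (t1 ^ 2 + 1)) + c * 1) - (a * (t3 ^ 2 + 1) + b * (t3 * (t3 ^ 2 + 1)) + c * 1)))
        by (unfold D; ring).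
      rewrite E1, E2, E3. ring. }
    assert (K2 : D * (b*(1 - (t1*t2 + t1*t3 + t2*t3))) = 0).
    { replace (D * (b*(1 - (t1*t2 + t1*t3 + t2*t3)))) with
        ((t1-t3)*(t2-t3)*((a * (t1 ^ 2 + 1) + b * (t1 * (t1 ^ 2 + 1)) + c * 1) - (a * (t2 ^ 2 + 1) + b * (t2 * (t2 ^ 2 + 1)) + c * 1))
         - (t1+t2) * (D * (a + b*(t1+t2+t3))))
        by (unfold D; ring).
      rewrite K1, E1, E2. ring. }
    apply Rmult_integral in K1. apply Rmult_integral in K2.
    destruct K1 as [K1|K1]; [contradiction|]. destruct K2 as [K2|K2]; [contradiction|].
    apply Rmult_integral in K2. destruct K2 as [K2|K2]; [|lra].
    exfalso. subst b. apply Hn. assert (a = 0) by lra. subst a. repeat split; auto. lra.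
  - intro H. set (e1 := t1+t2+t3). set (e3 := t1*t2*t3).
    exists (-e1), 1, (e1 - e3). unfold on_line, A, hX, hY, hZ.
    assert (G: forall u, -e1*(u^2+1) + 1*(u*(u^2+1)) + (e1-e3)*1 = (u-t1)*(u-t2)*(u-t3) + u*(1-(t1*t2+t1*t3+t2*t3))).
    { intro u. unfold e1, e3. ring. }
    rewrite !G, H. repeat split; try lra; ring.
Qed.

Lemma col_O t2 t3 : t2 <> t3 -> (collinear O (A t2) (A t3) <-> t2 + t3 = 0).
Proof.
  intros H23. split.
  - intros [a [b [c [Hn [E1 [E2 E3]]]]]]. unfold on_line, A, hX, hY, hZ in *.
    assert (b = 0) by lra. subst b.
    assert (K : a * ((t2 - t3) * (t2 + t3)) = 0).
    { replace (a * ((t2 - t3) * (t2 + t3))) with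
        ((a * (t2 ^ 2 + 1) + 0 * (t2 * (t2 ^ 2 + 1)) + c * 1) - (a * (t3 ^ 2 + 1) + 0 * (t3 * (t3 ^ 2 + 1)) + c * 1)) by ring.
      rewrite E2, E3; ring. }
    apply Rmult_integral in K. destruct K as [K|K].
    + exfalso. subst a. apply Hn. repeat split; auto. lra.
    + apply Rmult_integral in K. destruct K; lra.
  - intro H. exists 1, 0, (-(t2^2+1)). unfold on_line, A, hX, hY, hZ.
    replace t3 with (-t2) by lra. repeat split; try lra; ring.
Qed.

Lemma nint_sin x : ~ isint x -> sin (PI * x) <> 0.
Proof. intros H E. apply H. apply isint_sin. exact E. Qed.

Lemma cot_neq x y : ~ isint x -> ~ isint y -> ~ eqZ x y -> cot (PI * x) <> cot (PI * y).
Proof.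
  intros Hx Hy Hxy E. apply (cot_eq _ _ (nint_sin _ Hx) (nint_sin _ Hy)) in E.
  apply Hxy. apply isint_sin. replace (PI * (x - y)) with (PI * x - PI * y) by ring. exact E.
Qed.

Lemma eqZ_isint x : eqZ x 0 <-> isint x.
Proof. unfold eqZ, isint. split; intros [k Hk]; exists k; lra. Qed.

Theorem proposition4 :
  (* well defined on R/Z, with values in Gamma *)
  (forall x y : R, eqZ x y -> phi x = phi y) /\
  (forall x : R, in_Gamma (phi x)) /\
  (* injective on R/Z *)
  (forall x y : R, phi x = phi y -> eqZ x y) /\
  (* surjective onto Gamma *)
  (forall p : pt, in_Gamma p -> exists x : R, phi x = p) /\
  (* collinearity criterion *)
  (forall x y z : R, ~ eqZ x y -> ~ eqZ y z -> ~ eqZ x z ->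
     (collinear (phi x) (phi y) (phi z) <-> eqZ (x + y + z) 0)).
Proof.
  split; [|split; [|split; [|split]]].
  - intros x y Hxy. assert (Hd : isint (x - y)) by exact Hxy.
    destruct (classic (isint x)) as [Hx|Hx].
    + assert (Hy : isint y).
      { destruct Hx as [k Hk]; destruct Hd as [m Hm]. exists (k - m)%Z. rewrite minus_IZR. lra. }
      rewrite (phi_int _ Hx), (phi_int _ Hy). reflexivity.
    + assert (Hy : ~ isint y) by (intro Hy; apply Hx; exact (isint_sub2 _ _ Hd Hy)).
      rewrite (phi_nint _ Hx), (phi_nint _ Hy). f_equal.
      apply (cot_eq _ _ (nint_sin _ Hx) (nint_sin _ Hy)).
      replace (PI * x - PI * y) with (PI * (x - y)) by ring. apply isint_sin. exact Hd.
  - intro x. destruct (classic (isint x)) as [Hx|Hx].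
    + rewrite (phi_int _ Hx). exact I.
    + rewrite (phi_nint _ Hx). unfold A, in_Gamma. set (t := cot (PI * x)).
      split; [ring|]. assert (0 <= t * t) by apply Rle_0_sqr. nra.
  - intros x y E.
    destruct (classic (isint x)) as [Hx|Hx]; destruct (classic (isint y)) as [Hy|Hy].
    + exact (isint_sub _ _ Hx Hy).
    + rewrite (phi_int _ Hx), (phi_nint _ Hy) in E. discriminate.
    + rewrite (phi_nint _ Hx), (phi_int _ Hy) in E. discriminate.
    + rewrite (phi_nint _ Hx), (phi_nint _ Hy) in E. unfold A in E. injection E as E1 E2.
      set (tx := cot (PI * x)) in *. set (ty := cot (PI * y)) in *.
      assert (Htx : tx = ty).
      { assert (P : 0 < ty ^ 2 + 1) by (assert (0 <= ty*ty) by apply Rle_0_sqr; nra).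
        rewrite E1 in E2. apply (Rmult_eq_reg_r (ty^2+1)); lra. }
      apply (cot_eq _ _ (nint_sin _ Hx) (nint_sin _ Hy)) in Htx.
      apply isint_sin. replace (PI * (x - y)) with (PI * x - PI * y) by ring. exact Htx.
  - intros p Hp. destruct p as [u v|].
    + destruct Hp as [Hc Hu]. set (t := v / u).
      assert (Hut : u = t ^ 2 + 1).
      { unfold t. apply (Rmult_eq_reg_l (u^2)); [|apply pow_nonzero; auto].
        field_simplify; auto. rewrite Hc. ring. }
      assert (Hvt : v = t * u) by (unfold t; field; auto).
      set (th := (PI / 2 - atan t) / PI).
      assert (Eth : PI * th = PI / 2 - atan t) by (unfold th; field; exact PI_neq0).
      assert (Hs : sin (PI * th) <> 0).
      { rewrite Eth, sin_shift. pose proof (atan_bound t).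
        assert (0 < cos (atan t)) by (apply cos_gt_0; lra). lra. }
      assert (Hth : ~ isint th) by (intro H; apply Hs; apply isint_sin; exact H).
      exists th. rewrite (phi_nint _ Hth).
      assert (Ct : cot (PI * th) = t).
      { unfold cot. rewrite Eth, sin_shift, cos_shift. exact (tan_atan t). }
      rewrite Ct. unfold A. rewrite Hvt, Hut. reflexivity.
    + exists 0. apply phi_int. exists 0%Z. ring.
  - intros x y z Hxy Hyz Hxz. rewrite eqZ_isint.
    destruct (classic (isint x)) as [Hx|Hx].
    { assert (Hy : ~ isint y) by (intro Hy; apply Hxy; exact (isint_sub _ _ Hx Hy)).
      assert (Hz : ~ isint z) by (intro Hz; apply Hxz; exact (isint_sub _ _ Hx Hz)).
      rewrite (phi_int _ Hx), (phi_nint _ Hy), (phi_nint _ Hz).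
      rewrite col_O by (apply cot_neq; auto).
      replace (x + y + z) with (x + (y + z)) by ring. rewrite (isint_add _ _ Hx).
      rewrite isint_sin, Rmult_plus_distr_l, sin2 by (apply nint_sin; auto).
      pose proof (nint_sin _ Hy). pose proof (nint_sin _ Hz).
      split; intro HH0.
      - rewrite HH0. ring.
      - apply Rmult_integral in HH0. destruct HH0 as [HH0|HH0]; auto.
        apply Rmult_integral in HH0. destruct HH0; contradiction. }
    destruct (classic (isint y)) as [Hy|Hy].
    { assert (Hz : ~ isint z) by (intro Hz; apply Hyz; exact (isint_sub _ _ Hy Hz)).
      rewrite (phi_nint _ Hx), (phi_int _ Hy), (phi_nint _ Hz).
      assert (HH : collinear (A (cot (PI * x))) O (A (cot (PI * z))) <-> collinear O (A (cot (PI * x))) (A (cot (PI * z))))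
        by (split; apply col_swap12).
      rewrite HH, col_O by (apply cot_neq; auto).
      replace (x + y + z) with (y + (x + z)) by ring. rewrite (isint_add _ _ Hy).
      rewrite isint_sin, Rmult_plus_distr_l, sin2 by (apply nint_sin; auto).
      pose proof (nint_sin _ Hx). pose proof (nint_sin _ Hz).
      split; intro HH0.
      - rewrite HH0. ring.
      - apply Rmult_integral in HH0. destruct HH0 as [HH0|HH0]; auto.
        apply Rmult_integral in HH0. destruct HH0; contradiction. }
    destruct (classic (isint z)) as [Hz|Hz].
    { rewrite (phi_nint _ Hx), (phi_nint _ Hy), (phi_int _ Hz).
      assert (HH : collinear (A (cot (PI * x))) (A (cot (PI * y))) O <-> collinear O (A (cot (PI * x))) (A (cot (PI * y))))
        by (split; intro HC; [apply col_swap12, col_swap23, HC | apply col_swap23, col_swap12, HC]).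
      rewrite HH, col_O by (apply cot_neq; auto).
      replace (x + y + z) with (z + (x + y)) by ring. rewrite (isint_add _ _ Hz).
      rewrite isint_sin, Rmult_plus_distr_l, sin2 by (apply nint_sin; auto).
      pose proof (nint_sin _ Hx). pose proof (nint_sin _ Hy).
      split; intro HH0.
      - rewrite HH0. ring.
      - apply Rmult_integral in HH0. destruct HH0 as [HH0|HH0]; auto.
        apply Rmult_integral in HH0. destruct HH0; contradiction. }
    rewrite (phi_nint _ Hx), (phi_nint _ Hy), (phi_nint _ Hz).
    rewrite col_aff by (apply cot_neq; auto).
    rewrite isint_sin. replace (PI * (x + y + z)) with (PI * x + PI * y + PI * z) by ring.
    rewrite sin3 by (apply nint_sin; auto).
    pose proof (nint_sin _ Hx). pose proof (nint_sin _ Hy). pose proof (nint_sin _ Hz).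
    split; intro HH0.
    + rewrite HH0. ring.
    + apply Rmult_integral in HH0. destruct HH0 as [HH0|HH0]; [|lra].
      apply Rmult_integral in HH0. destruct HH0 as [HH0|HH0]; [|contradiction].
      apply Rmult_integral in HH0. destruct HH0; contradiction.
Qed.
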